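(* Let $\chi$ be a kernel as described in the context and let $f:\mathbb{R}^+\to\mathbb{R}$ be bounded and log-uniformly continuous. Then for every $w>0$ and every $x\in\mathbb{R}^+$, $$|(I_w^{\chi}f)(x)-f(x)|\le\big(M_0(\chi)+M_1(\chi)\big)\,\omega\!\left(f,\frac{1}{w}\right).$$
   Context: A kernel is a continuous function $\chi:\mathbb{R}^+\to\mathbb{R}$ satisfying: (i) $\sum_{k=-\infty}^{+\infty}\chi(e^{-k}u)=1$ for every $u\in\mathbb{R}^+$; (ii) $M_2(\chi)<+\infty$ and $\lim_{\gamma\to+\infty}\sum_{|k-\log u|>\gamma}|\chi(e^{-k}u)|\,|k-\log u|^2=0$ uniformly with respect to $u\in\mathbb{R}^+$. Absolute moments: $M_\nu(\chi,u)=\sum_{k\in\mathbb{Z}}|\chi(e^{-k}u)|\,|k-\log u|^\nu$, $M_\nu(\chi)=\sup_{u>0}M_\nu(\chi,u)$. For $w>0$, $x\in\mathbb{R}^+$: $(I_w^{\chi}f)(x)=\sum_{k\in\mathbb{Z}}\chi(e^{-k}x^w)\,w\int_{k/w}^{(k+1)/w}f(e^u)\,du$. A function $f$ is log-uniformly continuous if for every $\epsilon>0$ there is $\delta>0$ with $|f(u)-f(v)|<\epsilon$ whenever $|\log u-\log v|\le\delta$. The logarithmic modulus of continuity is $\omega(f,\delta)=\sup\{|f(x)-f(y)|: x,y\in\mathbb{R}^+,\ |\log x-\log y|\le\delta\}$ for $\delta>0$. *)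

(* Defs.v *)
From Stdlib Require Import Reals Lra Lia ZArith ClassicalEpsilon.
Open Scope R_scope.

Definition Zseries (a : Z -> R) (l : R) : Prop :=
  exists l1 l2,
    infinite_sum (fun n : nat => a (Z.of_nat n)) l1 /\
    infinite_sum (fun n : nat => a (- Z.of_nat n - 1)%Z) l2 /\
    l = l1 + l2.

Definition Zsum (a : Z -> R) : R :=
  epsilon (inhabits 0) (fun l => Zseries a l).

Definition Rsup (S : R -> Prop) : R :=
  epsilon (inhabits 0) (fun m => is_lub S m).

Definition Rint (g : R -> R) (a b : R) : R :=
  epsilon (inhabits 0)
    (fun I => exists pr : Riemann_integrable g a b, RiemannInt pr = I).

Definition moment_term (chi : R -> R) (nu : nat) (u : R) (k : Z) : R :=
  Rabs (chi (exp (- IZR k) * u)) * (Rabs (IZR k - ln u)) ^ nu.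

Definition M_u (chi : R -> R) (nu : nat) (u : R) : R :=
  Zsum (moment_term chi nu u).

Definition M (chi : R -> R) (nu : nat) : R :=
  Rsup (fun s => exists u, 0 < u /\ s = M_u chi nu u).

Definition M2_tail (chi : R -> R) (gamma u : R) : R :=
  Zsum (fun k => if Rlt_dec gamma (Rabs (IZR k - ln u))
                 then moment_term chi 2 u k else 0).

Definition is_kernel (chi : R -> R) : Prop :=
  (forall u, 0 < u -> continuity_pt chi u) /\
  (forall u, 0 < u -> Zseries (fun k => chi (exp (- IZR k) * u)) 1) /\
  (* M_2(chi) < +infinity *)
  (forall u, 0 < u -> exists s, Zseries (moment_term chi 2 u) s) /\
  (exists B, forall u, 0 < u -> M_u chi 2 u <= B) /\
  (forall eps, 0 < eps -> exists G, forall gamma, G < gamma ->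
     forall u, 0 < u -> Rabs (M2_tail chi gamma u) < eps).

Definition I_op (chi : R -> R) (w : R) (f : R -> R) (x : R) : R :=
  Zsum (fun k => chi (exp (- IZR k) * Rpower x w) *
                 (w * Rint (fun u => f (exp u)) (IZR k / w) ((IZR k + 1) / w))).

Definition log_unif_cont (f : R -> R) : Prop :=
  forall eps, 0 < eps -> exists delta, 0 < delta /\
    forall u v, 0 < u -> 0 < v -> Rabs (ln u - ln v) <= delta ->
      Rabs (f u - f v) < eps.

Definition bounded_pos (f : R -> R) : Prop :=
  exists B, forall x, 0 < x -> Rabs (f x) <= B.

Definition omega (f : R -> R) (delta : R) : R :=
  Rsup (fun s => exists x y, 0 < x /\ 0 < y /\ Rabs (ln x - ln y) <= delta /\
                             s = Rabs (f x - f y)).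

(* Main.v *)
Require Import Defs.
From Stdlib Require Import Reals Lra Lia ZArith ClassicalEpsilon.
From Coquelicot Require Import Coquelicot.
Open Scope R_scope.

Lemma Zsum_eq a l : Zseries a l -> Zsum a = l.
Proof.
  intros H. unfold Zsum.
  assert (Hs := epsilon_spec (inhabits 0) (fun l => Zseries a l) (ex_intro _ l H)).
  destruct Hs as [p1 [p2 [Hp1 [Hp2 ->]]]].
  destruct H as [q1 [q2 [Hq1 [Hq2 ->]]]].
  rewrite (uniqueness_sum _ _ _ Hp1 Hq1), (uniqueness_sum _ _ _ Hp2 Hq2). reflexivity.
Qed.

Lemma is_plus a b la lb : infinite_sum a la -> infinite_sum b lb ->
  infinite_sum (fun n => a n + b n) (la+lb).
Proof. intros Ha Hb. apply is_series_Reals. apply is_series_Reals in Ha, Hb.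
  exact (is_series_plus a b la lb Ha Hb). Qed.

Lemma is_scal a la c : infinite_sum a la -> infinite_sum (fun n => a n * c) (la*c).
Proof. intros Ha. apply is_series_Reals. apply is_series_Reals in Ha.
  apply (is_series_ext (fun n => scal c (a n))).
  - intros n. unfold scal; simpl. unfold mult; simpl. ring.
  - replace (la*c) with (scal c la) by (unfold scal; simpl; unfold mult; simpl; ring).
    exact (is_series_scal c a la Ha). Qed.

Lemma is_ext a b l : (forall n, a n = b n) -> infinite_sum a l -> infinite_sum b l.
Proof. intros E Ha. apply is_series_Reals. apply is_series_Reals in Ha.
  exact (is_series_ext a b l E Ha). Qed.

Lemma is_ex_le a b lb : (forall n, Rabs (a n) <= b n) -> infinite_sum b lb ->
  exists la, infinite_sum a la.
Proof. intros H Hb. apply is_series_Reals in Hb.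
  assert (ex_series a) as [la Hla].
  { apply (ex_series_le a b). intros n. exact (H n). exists lb; exact Hb. }
  exists la. apply is_series_Reals. exact Hla. Qed.

Lemma is_abs_le a b la lb : (forall n, Rabs (a n) <= b n) -> infinite_sum a la ->
  infinite_sum b lb -> Rabs la <= lb.
Proof.
  intros H Ha Hb.
  assert (Hp : forall N, Rabs (sum_f_R0 a N) <= sum_f_R0 b N).
  { intros N. eapply Rle_trans. apply Rsum_abs. apply sum_Rle. intros; apply H. }
  apply Rabs_le. split.
  - apply Rle_cv_lim with (Un := fun N => - sum_f_R0 b N) (Vn := sum_f_R0 a).
    + intros N. specialize (Hp N). pose proof (Rle_abs (- sum_f_R0 a N)).
      rewrite Rabs_Ropp in H0. lra.
    + apply (CV_opp (sum_f_R0 b)). exact Hb.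
    + exact Ha.
  - apply Rle_cv_lim with (Un := sum_f_R0 a) (Vn := sum_f_R0 b).
    + intros N. specialize (Hp N). pose proof (Rle_abs (sum_f_R0 a N)). lra.
    + exact Ha.
    + exact Hb.
Qed.

Lemma Z_plus a b la lb : Zseries a la -> Zseries b lb -> Zseries (fun k => a k + b k) (la+lb).
Proof. intros [a1 [a2 [H1 [H2 ->]]]] [b1 [b2 [G1 [G2 ->]]]].
  exists (a1+b1), (a2+b2). split; [|split].
  - exact (is_plus _ _ _ _ H1 G1).
  - exact (is_plus _ _ _ _ H2 G2).
  - ring. Qed.

Lemma Z_scal a la c : Zseries a la -> Zseries (fun k => a k * c) (la*c).
Proof. intros [a1 [a2 [H1 [H2 ->]]]].
  exists (a1*c), (a2*c). split; [|split].
  - exact (is_scal _ _ _ H1).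
  - exact (is_scal _ _ _ H2).
  - ring. Qed.

Lemma Z_ext a b l : (forall k, a k = b k) -> Zseries a l -> Zseries b l.
Proof. intros E [a1 [a2 [H1 [H2 ->]]]].
  exists a1, a2. split; [|split]; auto.
  - eapply is_ext; [|exact H1]. intros; apply E.
  - eapply is_ext; [|exact H2]. intros; apply E. Qed.

Lemma Z_ex_le a b lb : (forall k, Rabs (a k) <= b k) -> Zseries b lb ->
  exists la, Zseries a la /\ Rabs la <= lb.
Proof. intros H [b1 [b2 [H1 [H2 ->]]]].
  destruct (is_ex_le (fun n => a (Z.of_nat n)) _ _ (fun n => H _) H1) as [a1 Ha1].
  destruct (is_ex_le (fun n => a (- Z.of_nat n - 1)%Z) _ _ (fun n => H _) H2) as [a2 Ha2].
  exists (a1+a2). split. exists a1, a2; auto.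
  pose proof (is_abs_le _ _ _ _ (fun n => H _) Ha1 H1).
  pose proof (is_abs_le _ _ _ _ (fun n => H _) Ha2 H2).
  pose proof (Rabs_triang a1 a2). lra. Qed.

Lemma nonneg_bounded p K : (forall n, 0 <= p n) -> (forall N, sum_f_R0 p N <= K) ->
  exists l, infinite_sum p l /\ l <= K.
Proof.
  intros Hp HK.
  assert (Hg : Un_growing (sum_f_R0 p)).
  { intros n. rewrite tech5. specialize (Hp (S n)). lra. }
  destruct (growing_cv _ Hg) as [l Hl].
  { exists K. intros x [i ->]. apply HK. }
  exists l. split. exact Hl.
  apply Rle_cv_lim with (Un := sum_f_R0 p) (Vn := fun _ => K); auto.
  intros eps He. exists 0%nat. intros. unfold R_dist. rewrite Rminus_diag, Rabs_R0. lra.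
Qed.

Lemma nonneg_partial p l : (forall n, 0 <= p n) -> infinite_sum p l ->
  forall N, sum_f_R0 p N <= l.
Proof.
  intros Hp Hl N.
  assert (Hg : Un_growing (sum_f_R0 p)).
  { intros n. rewrite tech5. specialize (Hp (S n)). lra. }
  exact (growing_ineq _ _ Hg Hl N).
Qed.

Lemma Rsup_lub S : (exists x, S x) -> (exists m, forall x, S x -> x <= m) -> is_lub S (Rsup S).
Proof.
  intros Hne Hb. unfold Rsup. apply epsilon_spec.
  destruct (completeness S) as [m Hm].
  - destruct Hb as [m Hm]. exists m. intros x Hx. apply Hm, Hx.
  - exact Hne.
  - exists m. exact Hm.
Qed.

Lemma Rsup_ub S x : (exists m, forall x, S x -> x <= m) -> S x -> x <= Rsup S.
Proof. intros Hb Hx. destruct (Rsup_lub S (ex_intro _ x Hx) Hb) as [H _]. apply H, Hx. Qed.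

Lemma omega_ub f d p q : bounded_pos f -> 0 < p -> 0 < q -> Rabs (ln p - ln q) <= d ->
  Rabs (f p - f q) <= omega f d.
Proof.
  intros [B HB] Hp Hq Hd. unfold omega. apply Rsup_ub.
  - exists (2*B). intros s (x & y & Hx & Hy & _ & ->).
    pose proof (HB x Hx). pose proof (HB y Hy).
    pose proof (Rabs_triang (f x) (- f y)). rewrite Rabs_Ropp in H1. unfold Rminus. lra.
  - exists p, q. auto.
Qed.

Lemma omega_nonneg f d : bounded_pos f -> 0 <= d -> 0 <= omega f d.
Proof. intros Hb Hd. eapply Rle_trans; [|apply (omega_ub f d 1 1 Hb); try lra].
  apply Rabs_pos. rewrite Rminus_diag, Rabs_R0. exact Hd. Qed.

Lemma chain f d : bounded_pos f -> forall n p q, 0 < p -> 0 < q ->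
  Rabs (ln p - ln q) <= INR n * d -> Rabs (f p - f q) <= INR n * omega f d.
Proof.
  intros Hb n. induction n as [|n IH]; intros p q Hp Hq H.
  - simpl in *. rewrite Rmult_0_l in *.
    assert (ln p = ln q) by (pose proof (Rabs_pos (ln p - ln q)); apply Rabs_le_inv in H || idtac;
      destruct (Rcase_abs (ln p - ln q)); [rewrite Rabs_left in H; lra| rewrite Rabs_right in H; lra]).
    apply ln_inv in H0; auto. subst. rewrite Rminus_diag, Rabs_R0. lra.
  - set (N := INR (S n)). assert (HN : N = INR n + 1) by (unfold N; apply S_INR).
    assert (HN0 : 0 < N) by (rewrite HN; pose proof (pos_INR n); lra).
    set (E := (ln p - ln q) / N).
    assert (HE : Rabs E <= d).
    { unfold E. rewrite Rabs_div by lra. rewrite (Rabs_right N) by lra.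
      apply Rmult_le_reg_r with N; auto. unfold Rdiv. rewrite Rmult_assoc, Rinv_l by lra.
      fold N in H. lra. }
    set (r := exp (ln q + E * INR n)).
    assert (Hr : 0 < r) by apply exp_pos.
    assert (Hlr : ln r = ln q + E * INR n) by apply ln_exp.
    assert (d >= 0) by (pose proof (Rabs_pos E); lra).
    assert (H1 : Rabs (f p - f r) <= omega f d).
    { apply omega_ub; auto. rewrite Hlr.
      replace (ln p - (ln q + E * INR n)) with E; auto.
      unfold E. rewrite HN. field. lra. }
    assert (H2 : Rabs (f r - f q) <= INR n * omega f d).
    { apply IH; auto. rewrite Hlr. replace (ln q + E * INR n - ln q) with (E * INR n) by ring.
      rewrite Rabs_mult, (Rabs_right (INR n)) by (apply Rle_ge, pos_INR).
      pose proof (pos_INR n). nra. }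
    rewrite HN.
    replace (f p - f q) with ((f p - f r) + (f r - f q)) by ring.
    eapply Rle_trans. apply Rabs_triang. lra.
Qed.

Lemma Fcont f : log_unif_cont f -> forall u, continuous (fun u => f (exp u)) u.
Proof.
  intros Hf u. apply continuity_pt_filterlim.
  intros eps He. destruct (Hf eps He) as [d [Hd Hdd]].
  exists d. split. lra. intros y [_ Hy]. simpl in *. unfold R_dist in *.
  apply Hdd; try apply exp_pos. rewrite !ln_exp. lra.
Qed.

Lemma Fex f : log_unif_cont f -> forall a b, ex_RInt (fun u => f (exp u)) a b.
Proof. intros Hf a b. apply (ex_RInt_continuous (V := R_CompleteNormedModule)). intros; apply Fcont; auto. Qed.

Lemma hex f c : log_unif_cont f -> forall a b, ex_RInt (fun u => f (exp u) - c) a b.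
Proof. intros Hf a b. apply (ex_RInt_minus (fun u => f (exp u)) (fun _ => c)).
  apply Fex; auto. apply ex_RInt_const. Qed.

Lemma Rint_RInt f : log_unif_cont f -> forall a b,
  Rint (fun u => f (exp u)) a b = RInt (fun u => f (exp u)) a b.
Proof.
  intros Hf a b. unfold Rint.
  assert (Hr := ex_RInt_Reals_0 _ _ _ (Fex f Hf a b)).
  destruct (epsilon_spec (inhabits 0)
     (fun I => exists pr : Riemann_integrable (fun u => f (exp u)) a b, RiemannInt pr = I)
     (ex_intro _ _ (ex_intro _ Hr eq_refl))) as [pr Hpr].
  rewrite <- Hpr. symmetry. apply RInt_Reals.
Qed.

Lemma hb f w x : bounded_pos f -> 0 < w -> 0 < x -> forall z u, (0 <= z)%Z ->
  Rabs (w*u - w*ln x) <= IZR z -> Rabs (f (exp u) - f x) <= IZR z * omega f (1/w).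
Proof.
  intros Hb Hw Hx z u Hz H.
  rewrite <- (Z2Nat.id z Hz), <- INR_IZR_INZ.
  apply chain; auto. apply exp_pos. rewrite ln_exp, INR_IZR_INZ, Z2Nat.id by exact Hz.
  replace (w*u - w*ln x) with (w * (u - ln x)) in H by ring.
  rewrite Rabs_mult, (Rabs_right w) in H by lra.
  apply Rmult_le_reg_l with w; auto. replace (w * (IZR z * (1/w))) with (IZR z) by (field; lra).
  exact H.
Qed.

Lemma split_bound f w x : bounded_pos f -> log_unif_cont f -> 0 < w -> 0 < x ->
  forall t1 t2 t3 z1 z2, t1 <= t2 <= t3 -> (0 <= z1)%Z -> (0 <= z2)%Z ->
  (forall t, t1 <= t <= t2 -> Rabs t <= IZR z1) ->
  (forall t, t2 <= t <= t3 -> Rabs t <= IZR z2) ->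
  w * Rabs (RInt (fun u => f (exp u) - f x) ((t1 + w*ln x)/w) ((t3 + w*ln x)/w))
   <= ((t2-t1)*IZR z1 + (t3-t2)*IZR z2) * omega f (1/w).
Proof.
  intros Hb Hf Hw Hx t1 t2 t3 z1 z2 [H12 H23] Hz1 Hz2 B1 B2.
  set (a := w * ln x). set (om := omega f (1/w)).
  set (h := fun u => f (exp u) - f x).
  assert (Hm : forall t, t = w * ((t + a)/w) - a) by (intros; field; lra).
  assert (Hmono : forall s1 s2, s1 <= s2 -> (s1 + a)/w <= (s2 + a)/w).
  { intros. unfold Rdiv. apply Rmult_le_compat_r. left; apply Rinv_0_lt_compat; lra. lra. }
  assert (Hin : forall s1 s2 u, (s1+a)/w <= u <= (s2+a)/w -> s1 <= w*u - a <= s2).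
  { intros s1 s2 u [Hu1 Hu2]. split.
    - rewrite (Hm s1). apply Rplus_le_compat_r. apply Rmult_le_compat_l; lra.
    - rewrite (Hm s2). apply Rplus_le_compat_r. apply Rmult_le_compat_l; lra. }
  rewrite <- (RInt_Chasles h _ ((t2 + a)/w)) by (apply hex; auto).
  assert (I1 : Rabs (RInt h ((t1 + a)/w) ((t2 + a)/w)) <= ((t2+a)/w - (t1+a)/w) * (IZR z1 * om)).
  { apply abs_RInt_le_const. apply Hmono; lra. apply hex; auto.
    intros u Hu. apply (hb f w x Hb Hw Hx z1 u Hz1). apply B1. apply (Hin _ _ _ Hu). }
  assert (I2 : Rabs (RInt h ((t2 + a)/w) ((t3 + a)/w)) <= ((t3+a)/w - (t2+a)/w) * (IZR z2 * om)).
  { apply abs_RInt_le_const. apply Hmono; lra. apply hex; auto.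
    intros u Hu. apply (hb f w x Hb Hw Hx z2 u Hz2). apply B2. apply (Hin _ _ _ Hu). }
  pose proof (Rabs_triang (RInt h ((t1 + a)/w) ((t2 + a)/w)) (RInt h ((t2 + a)/w) ((t3 + a)/w))).
  change (plus (RInt h ((t1 + a) / w) ((t2 + a) / w)) (RInt h ((t2 + a) / w) ((t3 + a) / w)))
    with (RInt h ((t1 + a) / w) ((t2 + a) / w) + RInt h ((t2 + a) / w) ((t3 + a) / w)).
  replace (((t2 - t1) * IZR z1 + (t3 - t2) * IZR z2) * om) with
     (w * (((t2+a)/w - (t1+a)/w) * (IZR z1 * om) + ((t3+a)/w - (t2+a)/w) * (IZR z2 * om)))
     by (field; lra).
  apply Rmult_le_compat_l; lra.
Qed.

Lemma term_bound f w x : bounded_pos f -> log_unif_cont f -> 0 < w -> 0 < x ->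
  forall k : Z, Rabs (w * Rint (fun u => f (exp u)) (IZR k / w) ((IZR k + 1) / w) - f x)
     <= (1 + Rabs (IZR k - w * ln x)) * omega f (1/w).
Proof.
  intros Hb Hf Hw Hx k. rewrite Rint_RInt by auto.
  set (a := w * ln x). set (s := IZR k - a). set (om := omega f (1/w)).
  assert (Hom : 0 <= om) by (apply omega_nonneg; auto; left; apply Rdiv_lt_0_compat; lra).
  replace (IZR k / w) with ((s + a)/w) by (unfold s; f_equal; ring).
  replace ((IZR k + 1) / w) with ((s + 1 + a)/w) by (unfold s; f_equal; ring).
  assert (E : w * RInt (fun u => f (exp u)) ((s + a) / w) ((s + 1 + a) / w) - f x =
              w * RInt (fun u => f (exp u) - f x) ((s + a) / w) ((s + 1 + a) / w)).
  { rewrite (RInt_minus (V := R_CompleteNormedModule) (fun u => f (exp u)) (fun _ => f x)).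
    2: apply Fex; auto. 2: apply ex_RInt_const.
    rewrite RInt_const. unfold minus, plus, opp, scal; simpl. unfold mult; simpl.
    field. lra. }
  rewrite E, Rabs_mult, (Rabs_right w) by lra. clear E.
  destruct (Rle_or_lt 0 s) as [Hs|Hs].
  -
    destruct (archimed s) as [A1 A2]. set (z := up s) in *.
    assert (Hz : (0 <= z)%Z) by (apply le_IZR; lra).
    eapply Rle_trans.
    apply (split_bound f w x Hb Hf Hw Hx s (IZR z) (s+1) z (z+1)); try lia; try lra.
    + intros t Ht. apply Rabs_le. lra.
    + intros t Ht. rewrite plus_IZR. apply Rabs_le. lra.
    + rewrite plus_IZR, (Rabs_right s) by lra. apply Rmult_le_compat_r; auto. nra.
  - destruct (Rle_or_lt s (-1)) as [Hs1|Hs1].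
    + destruct (archimed (-s-1)) as [A1 A2]. set (z := up (-s-1)) in *.
      assert (Hz : (0 <= z)%Z) by (apply le_IZR; lra).
      eapply Rle_trans.
      apply (split_bound f w x Hb Hf Hw Hx s (- IZR z) (s+1) (z+1) z); try lia; try lra.
      * intros t Ht. rewrite plus_IZR. apply Rabs_le. lra.
      * intros t Ht. apply Rabs_le. lra.
      * rewrite plus_IZR, (Rabs_left s) by lra. apply Rmult_le_compat_r; auto. nra.
    + eapply Rle_trans.
      apply (split_bound f w x Hb Hf Hw Hx s s (s+1) 1 1); try lia; try lra.
      * intros t Ht. apply Rabs_le. lra.
      * intros t Ht. apply Rabs_le. lra.
      * apply Rmult_le_compat_r; auto. pose proof (Rabs_pos s). lra.
Qed.

Definition g (c y : R) := Rmin 3 (Rmax 0 (c + 2 - y)).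

Lemma g_mono c y y' : y <= y' -> g c y' <= g c y.
Proof. intros. unfold g, Rmin, Rmax. repeat destruct Rle_dec; lra. Qed.
Lemma g_one c y : Rabs (y - c) <= 1 -> g c y - g c (y+1) = 1.
Proof. intros H. apply Rabs_le_inv in H || idtac.
  destruct (Rcase_abs (y - c)); [rewrite Rabs_left in H|rewrite Rabs_right in H]; try lra;
  unfold g, Rmin, Rmax; repeat destruct Rle_dec; lra. Qed.
Lemma g_bnd c y : 0 <= g c y <= 3.
Proof. unfold g, Rmin, Rmax. repeat destruct Rle_dec; lra. Qed.

Lemma mt_nonneg chi nu u k : 0 <= moment_term chi nu u k.
Proof. unfold moment_term. apply Rmult_le_pos. apply Rabs_pos. apply pow_le, Rabs_pos. Qed.

Lemma mt_term chi : is_kernel chi -> exists C, 0 <= C /\ forall u k, 0 < u ->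
  moment_term chi 0 u k + moment_term chi 1 u k <=
  2 * moment_term chi 2 u k + 2 * C * (g (ln u) (IZR k) - g (ln u) (IZR k + 1)).
Proof.
  intros [Hc _].
  assert (He : exp (-1) <= exp 1) by (left; apply exp_increasing; lra).
  destruct (continuity_ab_maj (fun v => Rabs (chi v)) (exp (-1)) (exp 1) He) as [Mx [HM HMx]].
  { intros c Hc'. apply (continuity_pt_comp chi Rabs). apply Hc.
    pose proof (exp_pos (-1)); lra. apply Rcontinuity_abs. }
  exists (Rabs (chi Mx)). split. apply Rabs_pos.
  intros u k Hu. unfold moment_term. simpl pow.
  set (t := IZR k - ln u).
  assert (Hv : exp (- IZR k) * u = exp (- t)).
  { unfold t. rewrite <- (exp_ln u) at 1 by exact Hu. rewrite <- exp_plus. f_equal; ring. }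
  rewrite Hv. set (A := Rabs (chi (exp (-t)))).
  assert (HA : 0 <= A) by apply Rabs_pos.
  destruct (Rle_or_lt (Rabs t) 1) as [Ht|Ht].
  - rewrite g_one by exact Ht.
    assert (A <= Rabs (chi Mx)).
    { apply HM. apply Rabs_le_inv in Ht || idtac.
      destruct (Rcase_abs t); [rewrite Rabs_left in Ht|rewrite Rabs_right in Ht]; try lra;
      split; (destruct (Req_dec (-t) (-1)) as [->|]; [lra|]);
      (destruct (Req_dec (-t) 1) as [->|]; [lra|]); left; apply exp_increasing; lra. }
    assert (0 <= A * (Rabs t * (Rabs t * 1))) by (apply Rmult_le_pos; auto; pose proof (Rabs_pos t); nra).
    nra.
  - assert (0 <= g (ln u) (IZR k) - g (ln u) (IZR k + 1)) by (pose proof (g_mono (ln u) (IZR k) (IZR k + 1)); lra).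
    assert (0 <= Rabs (chi Mx)) by apply Rabs_pos.
    assert (A * 1 + A * (Rabs t * 1) <= 2 * (A * (Rabs t * (Rabs t * 1)))).
    { assert (1 + Rabs t <= 2 * (Rabs t * Rabs t)) by nra.
      replace (A * 1 + A * (Rabs t * 1)) with (A * (1 + Rabs t)) by ring.
      replace (2 * (A * (Rabs t * (Rabs t * 1)))) with (A * (2 * (Rabs t * Rabs t))) by ring.
      apply Rmult_le_compat_l; auto. }
    nra.
Qed.

Lemma tele_pos (p phi : nat -> R) c N :
  sum_f_R0 (fun n => 2 * p n + 2 * c * (phi n - phi (S n))) N
   = 2 * sum_f_R0 p N + 2 * c * (phi 0%nat - phi (S N)).
Proof. induction N; simpl; [ring| rewrite IHN; ring]. Qed.
Lemma tele_neg (p phi : nat -> R) c N :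
  sum_f_R0 (fun n => 2 * p n + 2 * c * (phi (S n) - phi n)) N
   = 2 * sum_f_R0 p N + 2 * c * (phi (S N) - phi 0%nat).
Proof. induction N; simpl; [ring| rewrite IHN; ring]. Qed.

Lemma split_nonneg (p r : nat -> R) K : (forall n, 0 <= p n) -> (forall n, 0 <= r n) ->
  (forall N, sum_f_R0 (fun n => p n + r n) N <= K) ->
  (exists l, infinite_sum p l /\ l <= K) /\ (exists l, infinite_sum r l /\ l <= K).
Proof.
  intros Hp Hr HK. split; apply nonneg_bounded; auto; intros N;
  (eapply Rle_trans; [|apply (HK N)]); apply sum_Rle; intros n _;
  pose proof (Hp n); pose proof (Hr n); lra.
Qed.

Lemma Mbound chi : is_kernel chi -> exists K, forall u, 0 < u ->
  (exists l, Zseries (moment_term chi 0 u) l /\ l <= K) /\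
  (exists l, Zseries (moment_term chi 1 u) l /\ l <= K).
Proof.
  intros Hk. destruct (mt_term chi Hk) as [C [HC HT]].
  destruct Hk as [_ [_ [H3 [[B HB] _]]]].
  exists (2 * (2*B + 6*C)). intros u Hu.
  destruct (H3 u Hu) as [s [l1 [l2 [Hl1 [Hl2 Hs]]]]].
  assert (HMs : M_u chi 2 u = s) by (apply Zsum_eq; exists l1, l2; auto).
  specialize (HB u Hu). rewrite HMs in HB.
  assert (P1 := nonneg_partial _ _ (fun n => mt_nonneg _ _ _ _) Hl1).
  assert (P2 := nonneg_partial _ _ (fun n => mt_nonneg _ _ _ _) Hl2).
  assert (G1 : 0 <= l1) by (eapply Rle_trans; [|apply (P1 0%nat)]; simpl; apply mt_nonneg).
  assert (G2 : 0 <= l2) by (eapply Rle_trans; [|apply (P2 0%nat)]; simpl; apply mt_nonneg).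
  set (phi := fun n => g (ln u) (INR n)).
  set (psi := fun n => g (ln u) (- INR n)).
  assert (Q1 : forall N, sum_f_R0 (fun n => moment_term chi 0 u (Z.of_nat n) +
                                      moment_term chi 1 u (Z.of_nat n)) N <= 2*B + 6*C).
  { intros N. eapply Rle_trans.
    apply sum_Rle with (Bn := fun n => 2 * moment_term chi 2 u (Z.of_nat n)
                                    + 2 * C * (phi n - phi (S n))).
    - intros n _. eapply Rle_trans. apply (HT u _ Hu). unfold phi.
      rewrite <- INR_IZR_INZ, S_INR. lra.
    - rewrite tele_pos. specialize (P1 N).
      pose proof (g_bnd (ln u) (INR 0)). pose proof (g_bnd (ln u) (INR (S N))).
      unfold phi. nra. }
  assert (Q2 : forall N, sum_f_R0 (fun n => moment_term chi 0 u (- Z.of_nat n - 1)%Z +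
                                      moment_term chi 1 u (- Z.of_nat n - 1)%Z) N <= 2*B + 6*C).
  { intros N. eapply Rle_trans.
    apply sum_Rle with (Bn := fun n => 2 * moment_term chi 2 u (- Z.of_nat n - 1)%Z
                                    + 2 * C * (psi (S n) - psi n)).
    - intros n _. eapply Rle_trans. apply (HT u _ Hu). unfold psi.
      rewrite minus_IZR, opp_IZR, <- INR_IZR_INZ, S_INR.
      replace (- INR n - 1 + 1) with (- INR n) by ring.
      replace (- INR n - 1) with (- (INR n + 1)) by ring. lra.
    - rewrite tele_neg. specialize (P2 N).
      pose proof (g_bnd (ln u) (- INR 0)). pose proof (g_bnd (ln u) (- INR (S N))).
      unfold psi. nra. }
  destruct (split_nonneg _ _ _ (fun n => mt_nonneg _ _ _ _) (fun n => mt_nonneg _ _ _ _) Q1)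
    as [[a1 [Ha1 Ba1]] [b1 [Hb1 Bb1]]].
  destruct (split_nonneg _ _ _ (fun n => mt_nonneg _ _ _ _) (fun n => mt_nonneg _ _ _ _) Q2)
    as [[a2 [Ha2 Ba2]] [b2 [Hb2 Bb2]]].
  split.
  - exists (a1 + a2). split. exists a1, a2; auto. lra.
  - exists (b1 + b2). split. exists b1, b2; auto. lra.
Qed.

Theorem theorem3 (chi f : R -> R) :
  is_kernel chi -> bounded_pos f -> log_unif_cont f ->
  forall w x, 0 < w -> 0 < x ->
    Rabs (I_op chi w f x - f x) <= (M chi 0 + M chi 1) * omega f (1 / w).
Proof.
  intros Hk Hb Hf w x Hw Hx.
  destruct (Mbound chi Hk) as [K HK].
  set (X := Rpower x w).
  assert (HX : 0 < X) by apply exp_pos.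
  assert (HlX : ln X = w * ln x) by (unfold X, Rpower; apply ln_exp).
  set (om := omega f (1/w)).
  assert (Hom : 0 <= om) by (apply omega_nonneg; auto; left; apply Rdiv_lt_0_compat; lra).
  destruct (HK X HX) as [[L0 [HL0 _]] [L1 [HL1 _]]].
  assert (HM0 : L0 <= M chi 0).
  { unfold M. apply Rsup_ub.
    - exists K. intros s [u [Hu ->]]. destruct (HK u Hu) as [[l [Hl Bl]] _].
      unfold M_u. rewrite (Zsum_eq _ _ Hl). exact Bl.
    - exists X. split; auto. unfold M_u. symmetry; apply Zsum_eq; auto. }
  assert (HM1 : L1 <= M chi 1).
  { unfold M. apply Rsup_ub.
    - exists K. intros s [u [Hu ->]]. destruct (HK u Hu) as [_ [l [Hl Bl]]].
      unfold M_u. rewrite (Zsum_eq _ _ Hl). exact Bl.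
    - exists X. split; auto. unfold M_u. symmetry; apply Zsum_eq; auto. }
  destruct Hk as [_ [H2 _]].
  assert (Z1 := Z_scal _ _ (f x) (H2 X HX)).
  assert (Zm := Z_scal _ _ om (Z_plus _ _ _ _ HL0 HL1)).
  set (T := fun k => chi (exp (- IZR k) * X) *
             (w * Rint (fun u => f (exp u)) (IZR k / w) ((IZR k + 1) / w))).
  assert (Hbd : forall k, Rabs (T k - chi (exp (- IZR k) * X) * f x) <=
      (moment_term chi 0 X k + moment_term chi 1 X k) * om).
  { intros k. unfold T. rewrite <- Rmult_minus_distr_l, Rabs_mult.
    unfold moment_term. simpl pow. rewrite HlX.
    pose proof (term_bound f w x Hb Hf Hw Hx k). fold om in H.
    pose proof (Rabs_pos (chi (exp (- IZR k) * X))).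
    replace ((Rabs (chi (exp (- IZR k) * X)) * 1 +
              Rabs (chi (exp (- IZR k) * X)) * (Rabs (IZR k - w * ln x) * 1)) * om)
      with (Rabs (chi (exp (- IZR k) * X)) * ((1 + Rabs (IZR k - w * ln x)) * om)) by ring.
    apply Rmult_le_compat_l; auto. }
  destruct (Z_ex_le (fun k => T k - chi (exp (- IZR k) * X) * f x) _ _ Hbd Zm)
    as [D [HD BD]].
  - assert (ZT := Z_plus _ _ _ _ HD Z1).
    assert (E : I_op chi w f x = D + 1 * f x).
    { unfold I_op. apply Zsum_eq. eapply Z_ext; [|exact ZT]. intros k; unfold T, X; simpl. ring. }
    rewrite E. replace (D + 1 * f x - f x) with D by ring.
    eapply Rle_trans. exact BD. apply Rmult_le_compat_r; auto. lra.
Qed.
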